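(* Under the assumptions and notation of the context, let $(\mathbf x_N,\mathbf m_N,\mathbf p_N,\mathbf y_N)$ be the unique solution of the system (AV$_N$) and $(\mathbf m,\mathbf p,\mathbf y)$ the unique solution of (MF). Then there is a constant $C$ independent of $N$ and of the initial states such that $\sup_{0\le t\le T}\big(|\mathbf x_N(t)-\mathbf m(t)|+|\mathbf m_N(t)-\mathbf m(t)|+|\mathbf p_N(t)-\mathbf p(t)|+|\mathbf y_N(t)-\mathbf y(t)|\big)\le C|x^{(N)}(0)-m_0|$, where $x^{(N)}(0)=\frac1N\sum_{i=1}^Nx_i(0)$.
   Context: Fix integers $n,n_1\ge1$, $T>0$, constant matrices $A,G,\Gamma\in\mathbb R^{n\times n}$, $B\in\mathbb R^{n\times n_1}$, $\eta,m_0\in\mathbb R^n$, $\gamma>0$, symmetric $Q\ge0$, $H\ge0$ ($n\times n$), $R>0$ ($n_1\times n_1$); $x_1(0),\dots,x_N(0)\in\mathbb R^n$ deterministic. Write $\widehat Q=(I-\Gamma)^TQ(I-\Gamma)$, $|z|_M^2=z^TMz$, $\|h\|_{L^2}=(\int_0^T|h|^2dt)^{1/2}$. Assume (H1): with $\dot z=(A+G)z+g$, $z(0)=0$, $\bar J''(g)=\int_0^T\{-z^T\widehat Qz+\frac1\gamma|g|^2\}dt-z(T)^THz(T)$, there is $\epsilon_0>0$ with $\bar J''(g)\ge\epsilon_0\|g\|_{L^2}^2$ for all $g$; and (H2): for $\nu\in L^2(0,T;\mathbb R^{n_1})$ let $(z_i,z,q)$ solve $\dot z_i=Az_i+B\nu+Gz+\gamma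 q$, $\dot z=(A+G)z+\gamma q$, $\dot q=-(A+G)^Tq-(I-\Gamma)^TQ(z_i-\Gamma z)$, $z_i(0)=z(0)=0$, $q(T)=Hz_i(T)$, $\bar J^a(\nu)=\int_0^T\{|z_i-\Gamma z|_Q^2+\nu^TR\nu-\gamma|q|^2\}dt+|z_i(T)|_H^2$, and there is $\delta_0>0$ with $\bar J^a(\nu)\ge\delta_0\|\nu\|_{L^2}^2$ for all $\nu$. Assume (MF): $\dot{\mathbf m}=(A+G)\mathbf m+BR^{-1}B^T\mathbf y+\gamma\mathbf p$, $\dot{\mathbf p}=-(A+G)^T\mathbf p-(I-\Gamma)^TQ[\mathbf m-(\Gamma\mathbf m+\eta)]$, $\dot{\mathbf y}=-A^T\mathbf y+Q[\mathbf m-(\Gamma\mathbf m+\eta)]$, $\mathbf m(0)=m_0$, $\mathbf p(T)=H\mathbf m(T)$, $\mathbf y(T)=-H\mathbf m(T)$, has a unique solution, and set $\bar u^*=R^{-1}B^T\mathbf y$. (AV$_N$): $\dot{\mathbf x}_N=A\mathbf x_N+BR^{-1}B^T\mathbf y_N+G\mathbf m_N+\gamma\mathbf p_N$, $\dot{\mathbf m}_N=(A+G)\mathbf m_N+B\bar u^*+\gamma\mathbf p_N$, $\dot{\mathbf p}_N=-(A+G)^T\mathbf p_N-(I-\Gamma)^TQ[\mathbf x_N-(\Gamma\mathbf m_N+\eta)]$, $\dot{\mathbf y}_N=-A^T\mathbf y_N+Q[\mathbf x_N-(\Gamma\mathbf m_N+\eta)]$, with $\mathbf x_N(0)=\frac1N\sum_{i=1}^Nx_i(0)$,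 $\mathbf m_N(0)=m_0$, $\mathbf p_N(T)=H\mathbf x_N(T)$, $\mathbf y_N(T)=-H\mathbf x_N(T)$ (uniquely solvable under these assumptions). *)

(* Defs.v *)
From Stdlib Require Import Reals Lra Lia.
Open Scope R_scope.

(* Vectors in R^k are functions nat -> R (only indices < k matter);
   matrices are functions nat -> nat -> R. *)
Definition vec := nat -> R.
Definition mat := nat -> nat -> R.

Fixpoint sumR (k : nat) (f : nat -> R) : R :=
  match k with O => 0 | S k' => sumR k' f + f k' end.

Definition vadd (u v : vec) : vec := fun i => u i + v i.
Definition vopp (u : vec) : vec := fun i => - u i.
Definition vsub (u v : vec) : vec := fun i => u i - v i.
Definition vscal (c : R) (u : vec) : vec := fun i => c * u i.

Definition mv (k : nat) (M : mat) (v : vec) : vec :=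
  fun i => sumR k (fun j => M i j * v j).
Definition mm (k : nat) (M N : mat) : mat :=
  fun i l => sumR k (fun j => M i j * N j l).
Definition tr (M : mat) : mat := fun i j => M j i.
Definition madd (M N : mat) : mat := fun i j => M i j + N i j.
Definition msub (M N : mat) : mat := fun i j => M i j - N i j.
Definition idm : mat := fun i j => if Nat.eqb i j then 1 else 0.

Definition dot (k : nat) (u v : vec) : R := sumR k (fun i => u i * v i).
Definition qf (k : nat) (M : mat) (z : vec) : R := dot k z (mv k M z).
Definition vnorm (k : nat) (z : vec) : R := sqrt (dot k z z).

Definition symm (k : nat) (M : mat) : Prop :=
  forall i j, (i < k)%nat -> (j < k)%nat -> M i j = M j i.
Definition psd (k : nat) (M : mat) : Prop := forall z : vec, 0 <= qf k M z.
Definition pd (k : nat) (M : mat) : Prop :=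
  forall z : vec, (exists i, (i < k)%nat /\ z i <> 0) -> 0 < qf k M z.
Definition is_inv (k : nat) (M Minv : mat) : Prop :=
  forall i j, (i < k)%nat -> (j < k)%nat ->
    mm k M Minv i j = idm i j /\ mm k Minv M i j = idm i j.

Definition cont_on (k : nat) (T : R) (g : R -> vec) : Prop :=
  forall i, (i < k)%nat -> forall t, 0 <= t <= T ->
    limit1_in (fun s => g s i) (fun s => 0 <= s <= T) (g t i) t.

(* classical solution on [0,T] of  z' = F(t)  (F is the right-hand side
   already evaluated along the solution): continuous on [0,T],
   differentiable on (0,T) with derivative F. *)
Definition solves_on (k : nat) (T : R) (z : R -> vec) (F : R -> vec) : Prop :=
  cont_on k T z /\
  forall i, (i < k)%nat -> forall t, 0 < t < T ->
    derivable_pt_lim (fun s => z s i) t (F t i).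

Definition veq (k : nat) (u v : vec) : Prop := forall i, (i < k)%nat -> u i = v i.

Definition Rint (f : R -> R) (a b v : R) : Prop :=
  exists pr : Riemann_integrable f a b, RiemannInt pr = v.

Definition Qhat (n : nat) (Gam Q : mat) : mat :=
  mm n (tr (msub idm Gam)) (mm n Q (msub idm Gam)).

Definition H1 (n : nat) (T : R) (A G Gam Q H : mat) (gamma : R) : Prop :=
  exists eps0, 0 < eps0 /\
  forall g z : R -> vec,
    cont_on n T g ->
    solves_on n T z (fun t => vadd (mv n (madd A G) (z t)) (g t)) ->
    veq n (z 0) (fun _ => 0) ->
    forall J L,
      Rint (fun t => - qf n (Qhat n Gam Q) (z t) + / gamma * dot n (g t) (g t)) 0 T J ->
      Rint (fun t => dot n (g t) (g t)) 0 T L ->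
      J - qf n H (z T) >= eps0 * L.

Definition H2 (n n1 : nat) (T : R) (A G Gam B Q H Rm : mat) (gamma : R) : Prop :=
  exists delta0, 0 < delta0 /\
  forall nu zi z q : R -> vec,
    cont_on n1 T nu ->
    solves_on n T zi (fun t => vadd (vadd (vadd (mv n A (zi t)) (mv n1 B (nu t)))
                                          (mv n G (z t))) (vscal gamma (q t))) ->
    solves_on n T z (fun t => vadd (mv n (madd A G) (z t)) (vscal gamma (q t))) ->
    solves_on n T q (fun t => vsub (vopp (mv n (tr (madd A G)) (q t)))
                                   (mv n (tr (msub idm Gam))
                                      (mv n Q (vsub (zi t) (mv n Gam (z t)))))) ->
    veq n (zi 0) (fun _ => 0) -> veq n (z 0) (fun _ => 0) ->
    veq n (q T) (mv n H (zi T)) ->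
    forall J L,
      Rint (fun t => qf n Q (vsub (zi t) (mv n Gam (z t))) + qf n1 Rm (nu t)
                     - gamma * dot n (q t) (q t)) 0 T J ->
      Rint (fun t => dot n1 (nu t) (nu t)) 0 T L ->
      J + qf n H (zi T) >= delta0 * L.

Definition MF_sol (n n1 : nat) (T : R) (A G Gam B Q H Rinv : mat) (eta m0 : vec)
    (gamma : R) (m p y : R -> vec) : Prop :=
  solves_on n T m (fun t => vadd (vadd (mv n (madd A G) (m t))
                                   (mv n1 B (mv n1 Rinv (mv n (tr B) (y t)))))
                              (vscal gamma (p t))) /\
  solves_on n T p (fun t => vsub (vopp (mv n (tr (madd A G)) (p t)))
                      (mv n (tr (msub idm Gam))
                         (mv n Q (vsub (m t) (vadd (mv n Gam (m t)) eta))))) /\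
  solves_on n T y (fun t => vadd (vopp (mv n (tr A) (y t)))
                      (mv n Q (vsub (m t) (vadd (mv n Gam (m t)) eta)))) /\
  veq n (m 0) m0 /\ veq n (p T) (mv n H (m T)) /\ veq n (y T) (vopp (mv n H (m T))).

(* average initial state  x^{(N)}(0) = (1/N) sum_{i<N} x_i(0)  (agents indexed 0..N-1) *)
Definition avg0 (N : nat) (x0 : nat -> vec) : vec :=
  fun i => / INR N * sumR N (fun k => x0 k i).

(* (AV_N), with ubar* = R^{-1} B^T y where y is the (MF) solution *)
Definition AV_sol (n n1 : nat) (T : R) (A G Gam B Q H Rinv : mat) (eta m0 : vec)
    (gamma : R) (y : R -> vec) (N : nat) (x0 : nat -> vec)
    (xN mN pN yN : R -> vec) : Prop :=
  solves_on n T xN (fun t => vadd (vadd (vadd (mv n A (xN t))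
                                   (mv n1 B (mv n1 Rinv (mv n (tr B) (yN t)))))
                                   (mv n G (mN t))) (vscal gamma (pN t))) /\
  solves_on n T mN (fun t => vadd (vadd (mv n (madd A G) (mN t))
                                   (mv n1 B (mv n1 Rinv (mv n (tr B) (y t)))))
                              (vscal gamma (pN t))) /\
  solves_on n T pN (fun t => vsub (vopp (mv n (tr (madd A G)) (pN t)))
                      (mv n (tr (msub idm Gam))
                         (mv n Q (vsub (xN t) (vadd (mv n Gam (mN t)) eta))))) /\
  solves_on n T yN (fun t => vadd (vopp (mv n (tr A) (yN t)))
                      (mv n Q (vsub (xN t) (vadd (mv n Gam (mN t)) eta)))) /\
  veq n (xN 0) (avg0 N x0) /\ veq n (mN 0) m0 /\
  veq n (pN T) (mv n H (xN T)) /\ veq n (yN T) (vopp (mv n H (xN T))).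

(* Main.v *)
Require Import Defs.
From Stdlib Require Import Reals Lra Lia FunctionalExtensionality List Classical.
Open Scope R_scope.


Lemma sumR_ext k f g : (forall i, (i < k)%nat -> f i = g i) -> sumR k f = sumR k g.
Proof. induction k; simpl; intros H; [reflexivity|]. rewrite IHk by (intros; apply H; lia). rewrite H by lia. reflexivity. Qed.

Lemma sumR_plus k f g : sumR k (fun i => f i + g i) = sumR k f + sumR k g.
Proof. induction k; simpl; [ring|]. rewrite IHk; ring. Qed.

Lemma sumR_scal k c f : sumR k (fun i => c * f i) = c * sumR k f.
Proof. induction k; simpl; [ring|]. rewrite IHk; ring. Qed.

Lemma sumR_zero k : sumR k (fun _ => 0) = 0.
Proof. induction k; simpl; [ring|]. rewrite IHk; ring. Qed.

Lemma sumR_swap k m (F : nat -> nat -> R) :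
  sumR k (fun i => sumR m (fun j => F i j)) = sumR m (fun j => sumR k (fun i => F i j)).
Proof.
  induction k; simpl. - rewrite sumR_zero; reflexivity.
  - rewrite IHk. rewrite <- sumR_plus. reflexivity.
Qed.

Lemma sumR_opp k f : sumR k (fun i => - f i) = - sumR k f.
Proof. induction k; simpl; [ring|]. rewrite IHk; ring. Qed.

Lemma sumR_minus k f g : sumR k (fun i => f i - g i) = sumR k f - sumR k g.
Proof. induction k; simpl; [ring|]. rewrite IHk; ring. Qed.

Lemma sumR_le k f g : (forall i, (i<k)%nat -> f i <= g i) -> sumR k f <= sumR k g.
Proof. induction k; simpl; intros H; [lra|]. pose proof (H k ltac:(lia)). pose proof (IHk ltac:(intros; apply H; lia)). lra. Qed.

Lemma sumR_nonneg k f : (forall i, (i<k)%nat -> 0 <= f i) -> 0 <= sumR k f.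
Proof. intros H. rewrite <- (sumR_zero k) at 1. apply sumR_le. auto. Qed.

Lemma sumR_abs k f : Rabs (sumR k f) <= sumR k (fun i => Rabs (f i)).
Proof. induction k; simpl. rewrite Rabs_R0; lra. eapply Rle_trans; [apply Rabs_triang|]. lra. Qed.

Lemma sumR_single k f j : (j < k)%nat -> (forall i, (i<k)%nat -> i <> j -> f i = 0) -> sumR k f = f j.
Proof.
  induction k; intros Hj H; [lia|]. simpl. destruct (Nat.eq_dec j k).
  - subst. rewrite (sumR_ext k f (fun _ => 0)). rewrite sumR_zero; ring. intros; apply H; lia.
  - rewrite IHk by (try lia; intros; apply H; lia). rewrite (H k) by lia. ring.
Qed.

Lemma sumR_zero_nonneg k f : (forall i, (i<k)%nat -> 0 <= f i) -> sumR k f = 0 -> forall i, (i<k)%nat -> f i = 0.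
Proof.
  induction k; intros H0 Hs i Hi; [lia|]. simpl in Hs.
  assert (0 <= sumR k f) by (apply sumR_nonneg; intros; apply H0; lia).
  assert (0 <= f k) by (apply H0; lia).
  assert (f k = 0) by lra. assert (sumR k f = 0) by lra.
  destruct (Nat.eq_dec i k). subst; auto. apply IHk; [intros; apply H0; lia | auto | lia].
Qed.

Definition lc (a : R) (u : vec) (b : R) (v : vec) : vec := fun i => a * u i + b * v i.

Lemma mv_lc k M a u b v : mv k M (lc a u b v) = lc a (mv k M u) b (mv k M v).
Proof. apply functional_extensionality; intro j. unfold mv, lc. rewrite <- !sumR_scal, <- sumR_plus.
  apply sumR_ext; intros; ring. Qed.

Lemma mv_ext k M u v : (forall i, (i<k)%nat -> u i = v i) -> mv k M u = mv k M v.
Proof. intros H; apply functional_extensionality; intro j; unfold mv; apply sumR_ext; intros; rewrite H; auto. Qed.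

Lemma mv_zero k M : mv k M (fun _ => 0) = fun _ => 0.
Proof. apply functional_extensionality; intro j; unfold mv. transitivity (sumR k (fun _ => 0)); [apply sumR_ext; intros; ring| apply sumR_zero]. Qed.

Lemma mv_vsub k M u v : mv k M (vsub u v) = vsub (mv k M u) (mv k M v).
Proof. apply functional_extensionality; intro j; unfold mv, vsub. rewrite <- sumR_minus. apply sumR_ext; intros; ring. Qed.

Lemma mv_vadd k M u v : mv k M (vadd u v) = vadd (mv k M u) (mv k M v).
Proof. apply functional_extensionality; intro j; unfold mv, vadd. rewrite <- sumR_plus. apply sumR_ext; intros; ring. Qed.

Lemma mv_madd k M N u : mv k (madd M N) u = vadd (mv k M u) (mv k N u).
Proof. apply functional_extensionality; intro j; unfold mv, vadd, madd. rewrite <- sumR_plus. apply sumR_ext; intros; ring. Qed.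

Lemma mv_msub k M N u : mv k (msub M N) u = vsub (mv k M u) (mv k N u).
Proof. apply functional_extensionality; intro j; unfold mv, vsub, msub. rewrite <- sumR_minus. apply sumR_ext; intros; ring. Qed.

Lemma mv_idm k u i : (i < k)%nat -> mv k idm u i = u i.
Proof. intros Hi. unfold mv. rewrite (sumR_single k _ i Hi).
  - unfold idm. rewrite Nat.eqb_refl. ring.
  - intros j Hj Hne. unfold idm. destruct (Nat.eqb_spec i j); [lia|ring]. Qed.

Lemma mv_mm k M N v i : mv k (mm k M N) v i = mv k M (mv k N v) i.
Proof. unfold mv, mm. rewrite (sumR_ext k (fun j => sumR k (fun l => M i l * N l j) * v j)
   (fun j => sumR k (fun l => M i l * N l j * v j))).
  2:{ intros. rewrite Rmult_comm, <- sumR_scal. apply sumR_ext; intros; ring. }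
  rewrite sumR_swap. apply sumR_ext; intros. rewrite <- sumR_scal. apply sumR_ext; intros; ring. Qed.

Lemma dot_comm k u v : dot k u v = dot k v u.
Proof. unfold dot; apply sumR_ext; intros; ring. Qed.

Lemma dot_tr a b M u v : dot a u (mv b (tr M) v) = dot b (mv a M u) v.
Proof. unfold dot, mv, tr.
  rewrite (sumR_ext a (fun i => u i * sumR b (fun j => M j i * v j)) (fun i => sumR b (fun j => u i * M j i * v j))).
  2:{ intros. rewrite <- sumR_scal. apply sumR_ext; intros; ring. }
  rewrite sumR_swap. apply sumR_ext; intros. rewrite Rmult_comm, <- sumR_scal. apply sumR_ext; intros; ring. Qed.

Lemma dot_ext k u u' v v' : (forall i, (i<k)%nat -> u i = u' i) -> (forall i, (i<k)%nat -> v i = v' i) -> dot k u v = dot k u' v'.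
Proof. intros H1 H2; unfold dot; apply sumR_ext; intros; rewrite H1, H2; auto. Qed.

Lemma dot_plus_l k u v w : dot k (vadd u v) w = dot k u w + dot k v w.
Proof. unfold dot, vadd. rewrite <- sumR_plus. apply sumR_ext; intros; ring. Qed.
Lemma dot_minus_l k u v w : dot k (vsub u v) w = dot k u w - dot k v w.
Proof. unfold dot, vsub. rewrite <- sumR_minus. apply sumR_ext; intros; ring. Qed.
Lemma dot_plus_r k u v w : dot k w (vadd u v) = dot k w u + dot k w v.
Proof. unfold dot, vadd. rewrite <- sumR_plus. apply sumR_ext; intros; ring. Qed.
Lemma dot_minus_r k u v w : dot k w (vsub u v) = dot k w u - dot k w v.
Proof. unfold dot, vsub. rewrite <- sumR_minus. apply sumR_ext; intros; ring. Qed.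
Lemma dot_opp_l k u w : dot k (vopp u) w = - dot k u w.
Proof. unfold dot, vopp. rewrite <- sumR_opp. apply sumR_ext; intros; ring. Qed.
Lemma dot_scal_l k c u w : dot k (vscal c u) w = c * dot k u w.
Proof. unfold dot, vscal. rewrite <- sumR_scal. apply sumR_ext; intros; ring. Qed.
Lemma dot_scal_r k c u w : dot k w (vscal c u) = c * dot k w u.
Proof. unfold dot, vscal. rewrite <- sumR_scal. apply sumR_ext; intros; ring. Qed.
Lemma dot_zero_r k u : dot k u (fun _ => 0) = 0.
Proof. unfold dot. transitivity (sumR k (fun _ => 0)); [apply sumR_ext; intros; ring| apply sumR_zero]. Qed.

Lemma dot_self_nonneg k u : 0 <= dot k u u.
Proof. apply sumR_nonneg; intros; nra. Qed.

Lemma dot_self_zero k u : dot k u u = 0 -> forall i, (i<k)%nat -> u i = 0.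
Proof. intros H i Hi. assert (u i * u i = 0). apply (sumR_zero_nonneg k (fun i => u i * u i)); auto. intros; nra. nra. Qed.


Definition DT (T : R) : R -> Prop := fun s => 0 <= s <= T.
Definition rc (T : R) (g : R -> R) (t : R) : Prop := limit1_in g (DT T) (g t) t.

Lemma rc_const T c t : rc T (fun _ => c) t.
Proof. unfold rc. apply (limit_free (fun _ => c) _ 0). Qed.
Lemma rc_plus T f g t : rc T f t -> rc T g t -> rc T (fun s => f s + g s) t.
Proof. unfold rc; intros; apply limit_plus; auto. Qed.
Lemma rc_minus T f g t : rc T f t -> rc T g t -> rc T (fun s => f s - g s) t.
Proof. unfold rc; intros; apply limit_minus; auto. Qed.
Lemma rc_mult T f g t : rc T f t -> rc T g t -> rc T (fun s => f s * g s) t.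
Proof. unfold rc; intros; apply limit_mul; auto. Qed.
Lemma rc_opp T f t : rc T f t -> rc T (fun s => - f s) t.
Proof. unfold rc; intros; apply limit_Ropp; auto. Qed.
Lemma rc_ext T f g t : (forall s, f s = g s) -> rc T f t -> rc T g t.
Proof. intros H. replace g with f; auto. apply functional_extensionality; auto. Qed.

Lemma rc_sumR T k (F : R -> nat -> R) t :
  (forall i, (i<k)%nat -> rc T (fun s => F s i) t) -> rc T (fun s => sumR k (F s)) t.
Proof. induction k; intros H; simpl. apply (rc_const T 0). apply rc_plus. apply IHk; intros; apply H; lia. apply H; lia. Qed.

Lemma rc_mv T k M (u : R -> vec) t :
  (forall j, (j<k)%nat -> rc T (fun s => u s j) t) -> forall i, rc T (fun s => mv k M (u s) i) t.
Proof. intros H i. unfold mv. apply (rc_sumR T k (fun s j => M i j * u s j)). intros; apply rc_mult; auto. apply rc_const. Qed.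

Lemma rc_dot T k (u v : R -> vec) t :
  (forall j, (j<k)%nat -> rc T (fun s => u s j) t) -> (forall j, (j<k)%nat -> rc T (fun s => v s j) t) ->
  rc T (fun s => dot k (u s) (v s)) t.
Proof. intros H1 H2. unfold dot. apply (rc_sumR T k (fun s j => u s j * v s j)). intros; apply rc_mult; auto. Qed.

Lemma der_ext f g t l : (forall s, f s = g s) -> derivable_pt_lim f t l -> derivable_pt_lim g t l.
Proof. intros H. replace g with f; auto. apply functional_extensionality; auto. Qed.

Lemma der_plus f g t a b : derivable_pt_lim f t a -> derivable_pt_lim g t b -> derivable_pt_lim (fun s => f s + g s) t (a + b).
Proof. intros; apply (derivable_pt_lim_plus f g); auto. Qed.
Lemma der_minus f g t a b : derivable_pt_lim f t a -> derivable_pt_lim g t b -> derivable_pt_lim (fun s => f s - g s) t (a - b).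
Proof. intros; apply (derivable_pt_lim_minus f g); auto. Qed.
Lemma der_mult f g t a b : derivable_pt_lim f t a -> derivable_pt_lim g t b -> derivable_pt_lim (fun s => f s * g s) t (a * g t + f t * b).
Proof. intros; apply (derivable_pt_lim_mult f g); auto. Qed.
Lemma der_const c t : derivable_pt_lim (fun _ => c) t 0.
Proof. apply (derivable_pt_lim_const c). Qed.
Lemma der_val f t a b : a = b -> derivable_pt_lim f t a -> derivable_pt_lim f t b.
Proof. intros ->; auto. Qed.

Lemma der_sumR k (F : R -> nat -> R) t (d : nat -> R) :
  (forall i, (i<k)%nat -> derivable_pt_lim (fun s => F s i) t (d i)) ->
  derivable_pt_lim (fun s => sumR k (F s)) t (sumR k d).
Proof. induction k; intros H; simpl. apply (der_const 0). apply der_plus. apply IHk; intros; apply H; lia. apply H; lia. Qed.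

Lemma der_mv k M (u : R -> vec) t (du : vec) :
  (forall j, (j<k)%nat -> derivable_pt_lim (fun s => u s j) t (du j)) ->
  forall i, derivable_pt_lim (fun s => mv k M (u s) i) t (mv k M du i).
Proof. intros H i. unfold mv. apply (der_sumR k (fun s j => M i j * u s j)). intros j Hj.
  apply (der_val _ _ (0 * u t j + M i j * du j)); [ring|]. apply der_mult; [apply der_const| apply H; auto]. Qed.

Lemma der_dot k (u v : R -> vec) t (du dv : vec) :
  (forall j, (j<k)%nat -> derivable_pt_lim (fun s => u s j) t (du j)) ->
  (forall j, (j<k)%nat -> derivable_pt_lim (fun s => v s j) t (dv j)) ->
  derivable_pt_lim (fun s => dot k (u s) (v s)) t (dot k du (v t) + dot k (u t) dv).
Proof. intros H1 H2. unfold dot. rewrite <- sumR_plus. apply (der_sumR k (fun s j => u s j * v s j)).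
  intros j Hj. apply der_mult; auto. Qed.


Definition clamp (T s : R) : R := Rmax 0 (Rmin T s).

Lemma clamp_in T s : 0 <= T -> 0 <= clamp T s <= T.
Proof. intros. unfold clamp, Rmax, Rmin. repeat destruct Rle_dec; lra. Qed.
Lemma clamp_id T s : 0 <= s <= T -> clamp T s = s.
Proof. intros. unfold clamp, Rmax, Rmin. repeat destruct Rle_dec; lra. Qed.
Lemma clamp_lip T s x : 0 <= T -> Rabs (clamp T s - clamp T x) <= Rabs (s - x).
Proof. intros. unfold clamp, Rmax, Rmin. repeat destruct Rle_dec; unfold Rabs; repeat destruct Rcase_abs; lra. Qed.

Lemma rc_cont_ext T g : 0 <= T -> (forall t, 0 <= t <= T -> rc T g t) ->
  forall x, continuity_pt (fun s => g (clamp T s)) x.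
Proof.
  intros HT H x. unfold continuity_pt, continue_in, limit1_in, limit_in. intros eps Heps.
  destruct (H (clamp T x) (clamp_in T x HT) eps Heps) as [alp [Halp H2]].
  exists alp; split; auto. intros y [_ Hy]. apply H2. split. apply clamp_in; auto.
  simpl in *. unfold R_dist in *. eapply Rle_lt_trans; [apply clamp_lip; auto| auto].
Qed.

Lemma cont_rc T g t : continuity_pt g t -> rc T g t.
Proof.
  unfold continuity_pt, continue_in, rc, limit1_in, limit_in. intros H eps Heps.
  destruct (H eps Heps) as [alp [Ha H2]]. exists alp; split; auto. intros y [_ Hy].
  destruct (Req_dec t y). subst. simpl. unfold R_dist. rewrite Rminus_diag, Rabs_R0; auto.
  apply H2. split; auto. split; auto. exact I.
Qed.

Lemma der_local T f g t l : 0 < t < T -> (forall s, 0 < s < T -> f s = g s) ->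
  derivable_pt_lim f t l -> derivable_pt_lim g t l.
Proof.
  intros Ht Hfg H eps Heps. destruct (H eps Heps) as [d Hd].
  assert (Hp : 0 < Rmin d (Rmin t (T - t))). { apply Rmin_pos. apply cond_pos. apply Rmin_pos; lra. }
  exists (mkposreal _ Hp). intros h Hh Hh2. simpl in Hh2.
  assert (Hm1 := Rmin_l d (Rmin t (T - t))). assert (Hm2 := Rmin_r d (Rmin t (T - t))).
  assert (Hm3 := Rmin_l t (T - t)). assert (Hm4 := Rmin_r t (T - t)).
  rewrite <- (Hfg (t + h)), <- (Hfg t); try lra.
  apply Hd; auto. lra. revert Hh2; unfold Rabs; destruct Rcase_abs; intros; lra.
Qed.

Lemma mono T f (f' : R -> R) : 0 < T -> (forall t, 0 <= t <= T -> rc T f t) ->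
  (forall t, 0 < t < T -> derivable_pt_lim f t (f' t)) -> (forall t, 0 < t < T -> f' t <= 0) ->
  forall x y, 0 <= x -> x <= y -> y <= T -> f y <= f x.
Proof.
  intros HT Hc Hd Hn x y Hx Hxy HyT. destruct (Req_dec x y). subst; lra.
  set (g := fun s => f (clamp T s)).
  assert (Hdg : forall c, x < c < y -> derivable_pt_lim g c (f' c)).
  { intros c Hc'. apply (der_local T f g c); try lra. intros; unfold g; rewrite clamp_id; auto; lra. apply Hd; lra. }
  pose (pr1 := fun c (P : x < c < y) => exist (fun l => derivable_pt_abs g c l) (f' c) (Hdg c P)).
  pose (pr2 := fun c (P : x < c < y) => derivable_pt_id c).
  destruct (MVT g id x y pr1 pr2) as [c [P HP]]. lra.
  { intros; apply rc_cont_ext; auto; lra. }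
  { intros c _. apply derivable_continuous_pt, derivable_pt_id. }
  unfold pr1, pr2 in HP. rewrite derive_pt_id in HP. simpl in HP. unfold id in HP.
  unfold g in HP. rewrite !clamp_id in HP by lra. assert (f' c <= 0) by (apply Hn; lra). nra.
Qed.

Lemma const_der T f : 0 < T -> (forall t, 0 <= t <= T -> rc T f t) ->
  (forall t, 0 < t < T -> derivable_pt_lim f t 0) -> forall t, 0 <= t <= T -> f t = f 0.
Proof.
  intros HT Hc Hd t Ht.
  assert (f t <= f 0) by (apply (mono T f (fun _ => 0)); auto; intros; lra).
  assert (- f t <= - f 0). { apply (mono T (fun s => - f s) (fun _ => - 0)); auto; try (intros; lra).
    intros; apply rc_opp; auto. intros; apply (derivable_pt_lim_opp f); auto. }
  lra.
Qed.

Lemma Rmin0T T : 0 <= T -> Rmin 0 T = 0.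
Proof. intros; unfold Rmin; destruct Rle_dec; lra. Qed.
Lemma Rmax0T T : 0 <= T -> Rmax 0 T = T.
Proof. intros; unfold Rmax; destruct Rle_dec; lra. Qed.

Lemma ftc T (Phi g : R -> R) : 0 < T -> (forall t, 0 <= t <= T -> rc T Phi t) ->
  (forall t, 0 < t < T -> derivable_pt_lim Phi t (g t)) ->
  (forall t, 0 <= t <= T -> rc T g t) -> Rint g 0 T (Phi T - Phi 0).
Proof.
  intros HT HP Hd Hg. assert (h : 0 <= T) by lra.
  set (g' := fun s => g (clamp T s)).
  assert (C0 : forall x, 0 <= x <= T -> continuity_pt g' x) by (intros; apply rc_cont_ext; auto).
  set (prim := primitive h (FTC_P1 h C0)).
  assert (Hpd : forall t, 0 <= t <= T -> derivable_pt_lim prim t (g' t)) by (intros; apply RiemannInt_P28; auto).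
  assert (Hcst := const_der T (fun s => Phi s - prim s) HT).
  assert (E : Phi T - prim T = Phi 0 - prim 0).
  { apply Hcst; [| |lra].
    - intros t Ht. apply rc_minus; auto. apply cont_rc. apply derivable_continuous_pt. exists (g' t). apply Hpd; auto.
    - intros t Ht. apply (der_val _ _ (g t - g' t)). unfold g'; rewrite clamp_id; lra.
      apply der_minus; auto. apply Hpd; lra. }
  pose (pr0 := @continuity_implies_RiemannInt g' 0 T h C0).
  assert (E2 : RiemannInt pr0 = prim T - prim 0) by apply RiemannInt_P20.
  assert (pr : Riemann_integrable g 0 T).
  { assert (Hext : forall x, Rmin 0 T <= x <= Rmax 0 T -> g' x = g x).
    { rewrite Rmin0T, Rmax0T by lra. intros; unfold g'; rewrite clamp_id; auto. }
    exact (@Riemann_integrable_ext g' g 0 T Hext pr0). }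
  exists pr. rewrite (@RiemannInt_P18 g g' 0 T pr pr0 h). lra.
  intros; unfold g'; rewrite clamp_id; lra.
Qed.

Lemma integrable T g : 0 < T -> (forall t, 0 <= t <= T -> rc T g t) -> exists L, Rint g 0 T L.
Proof.
  intros HT Hg. assert (h : 0 <= T) by lra.
  set (g' := fun s => g (clamp T s)).
  assert (C0 : forall x, 0 <= x <= T -> continuity_pt g' x) by (intros; apply rc_cont_ext; auto).
  assert (pr : Riemann_integrable g 0 T).
  { assert (Hext : forall x, Rmin 0 T <= x <= Rmax 0 T -> g' x = g x).
    { rewrite Rmin0T, Rmax0T by lra. intros; unfold g'; rewrite clamp_id; auto. }
    exact (@Riemann_integrable_ext g' g 0 T Hext (@continuity_implies_RiemannInt g' 0 T h C0)). }
  exists (RiemannInt pr), pr; auto.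
Qed.

Lemma rc_interior_zero T g t : 0 < T -> 0 <= t <= T -> rc T g t -> (forall s, 0 < s < T -> g s = 0) -> g t = 0.
Proof.
  intros HT Ht Hc Hz. destruct (Req_dec (g t) 0) as [|Hne]; auto. exfalso.
  assert (He : Rabs (g t) > 0) by (apply Rabs_pos_lt; auto).
  destruct (Hc _ He) as [alp [Ha H]].
  set (lam := Rmin (1/2) (alp / (2 * T))).
  assert (Hl1 : 0 < lam) by (apply Rmin_pos; [lra| apply Rdiv_lt_0_compat; lra]).
  assert (Hl2 : lam <= 1/2) by apply Rmin_l. assert (Hl3 : lam <= alp / (2*T)) by apply Rmin_r.
  assert (Hl4 : lam * (2*T) <= alp). { apply (Rmult_le_compat_r (2*T)) in Hl3; [|lra]. field_simplify in Hl3; lra. }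
  set (s := (1 - lam) * t + lam * (T/2)).
  assert (Hs : 0 < s < T) by (unfold s; split; nra).
  assert (Hd : Rabs (s - t) < alp). { unfold s. replace ((1 - lam) * t + lam * (T / 2) - t) with (lam * (T/2 - t)) by ring.
    rewrite Rabs_mult, Rabs_pos_eq by lra. assert (Rabs (T/2 - t) <= T/2) by (unfold Rabs; destruct Rcase_abs; lra). nra. }
  specialize (H s (conj (conj (Rlt_le _ _ (proj1 Hs)) (Rlt_le _ _ (proj2 Hs))) Hd)). simpl in H. unfold R_dist in H.
  rewrite Hz in H by auto. rewrite Rminus_0_l, Rabs_Ropp in H. lra.
Qed.

Lemma zero_int T g L : 0 < T -> (forall t, 0 <= t <= T -> rc T g t) -> (forall t, 0 <= t <= T -> 0 <= g t) ->
  Rint g 0 T L -> L <= 0 -> forall t, 0 <= t <= T -> g t = 0.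
Proof.
  intros HT Hg Hpos [pr Hpr] HL. assert (h : 0 <= T) by lra.
  set (g' := fun s => g (clamp T s)).
  assert (C0 : forall x, 0 <= x <= T -> continuity_pt g' x) by (intros; apply rc_cont_ext; auto).
  set (prim := primitive h (FTC_P1 h C0)).
  assert (Hpd : forall t, 0 <= t <= T -> derivable_pt_lim prim t (g' t)) by (intros; apply RiemannInt_P28; auto).
  pose (pr0 := @continuity_implies_RiemannInt g' 0 T h C0).
  assert (E2 : RiemannInt pr0 = prim T - prim 0) by apply RiemannInt_P20.
  assert (E3 : RiemannInt pr = RiemannInt pr0).
  { apply RiemannInt_P18; auto. intros; unfold g'; rewrite clamp_id; lra. }
  assert (Hrc : forall t, 0 <= t <= T -> rc T (fun s => - prim s) t).
  { intros. apply rc_opp. apply cont_rc. apply derivable_continuous_pt. exists (g' t). apply Hpd; auto. }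
  assert (Hmono : forall x y, 0 <= x -> x <= y -> y <= T -> - prim y <= - prim x).
  { apply (mono T (fun s => - prim s) (fun s => - g' s)); auto.
    intros; apply (derivable_pt_lim_opp prim); apply Hpd; lra.
    intros; unfold g'; rewrite clamp_id by lra. assert (0 <= g t) by (apply Hpos; lra). lra. }
  assert (Hc : forall t, 0 <= t <= T -> prim t = prim 0).
  { intros t Ht. assert (- prim t <= - prim 0) by (apply Hmono; lra).
    assert (- prim T <= - prim t) by (apply Hmono; lra). lra. }
  assert (Hz : forall s, 0 < s < T -> g s = 0).
  { intros s Hs. transitivity (g' s). unfold g'; rewrite clamp_id; lra.
    apply (uniqueness_limite prim s). apply Hpd; lra.
    apply (der_local T (fun _ => prim 0) prim s); auto. intros; symmetry; apply Hc; lra. apply der_const. }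
  intros t Ht. apply (rc_interior_zero T g t); auto.
Qed.

Lemma bounded T g : 0 < T -> (forall t, 0 <= t <= T -> rc T g t) -> exists M, forall t, 0 <= t <= T -> Rabs (g t) <= M.
Proof.
  intros HT Hg. assert (h : 0 <= T) by lra.
  set (g' := fun s => Rabs (g (clamp T s))).
  assert (C0 : forall x, 0 <= x <= T -> continuity_pt g' x).
  { intros. unfold g'. apply (continuity_pt_comp (fun s => g (clamp T s)) Rabs). apply rc_cont_ext; auto. apply Rcontinuity_abs. }
  destruct (continuity_ab_maj g' 0 T h C0) as [Mx [H1 H2]].
  exists (g' Mx). intros t Ht. specialize (H1 t Ht). unfold g' in H1 |- *. rewrite (clamp_id T t) in H1; auto.
Qed.


Lemma term_le k f i : (i<k)%nat -> (forall j, (j<k)%nat -> 0 <= f j) -> f i <= sumR k f.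
Proof. induction k; intros Hi H; [lia|]. simpl. assert (0 <= sumR k f) by (apply sumR_nonneg; intros; apply H; lia).
  destruct (Nat.eq_dec i k). subst; lra. assert (f i <= sumR k f) by (apply IHk; [lia| intros; apply H; lia]).
  assert (0 <= f k) by (apply H; lia). lra. Qed.

Definition mnorm (n : nat) (M : mat) : R := sumR n (fun i => sumR n (fun j => Rabs (M i j))).

Lemma dot_mv_abs n M u : Rabs (dot n u (mv n M u)) <= mnorm n M * dot n u u.
Proof.
  set (S := dot n u u).
  transitivity (sumR n (fun i => sumR n (fun j => Rabs (M i j) * S))).
  2:{ right. unfold mnorm. rewrite Rmult_comm, <- sumR_scal. apply sumR_ext; intros.
      rewrite <- sumR_scal. apply sumR_ext; intros; ring. }
  unfold dot at 1, mv. eapply Rle_trans; [apply sumR_abs|]. apply sumR_le. intros i Hi.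
  rewrite <- sumR_scal. eapply Rle_trans; [apply sumR_abs|]. apply sumR_le. intros j Hj.
  assert (Hi2 : u i * u i <= S) by (apply (term_le n (fun k => u k * u k)); auto; intros; nra).
  assert (Hj2 : u j * u j <= S) by (apply (term_le n (fun k => u k * u k)); auto; intros; nra).
  rewrite !Rabs_mult. assert (0 <= Rabs (M i j)) by apply Rabs_pos.
  assert (Rabs (u i) * Rabs (u j) <= S).
  { assert (Rabs (u i) * Rabs (u i) = u i * u i) by (rewrite <- Rabs_mult; apply Rabs_pos_eq; nra).
    assert (Rabs (u j) * Rabs (u j) = u j * u j) by (rewrite <- Rabs_mult; apply Rabs_pos_eq; nra).
    assert (0 <= Rabs (u i)) by apply Rabs_pos. assert (0 <= Rabs (u j)) by apply Rabs_pos.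
    nra. }
  replace (Rabs (u i) * (Rabs (M i j) * Rabs (u j))) with (Rabs (M i j) * (Rabs (u i) * Rabs (u j))) by ring.
  apply Rmult_le_compat_l; auto.
Qed.

Lemma der_exp_lin a t : derivable_pt_lim (fun s => exp (a * s)) t (a * exp (a * t)).
Proof.
  apply (der_val _ _ (exp (a * t) * (a * 1))). ring.
  apply (derivable_pt_lim_comp (fun s => a * s) exp). 
  apply (der_val _ _ (0 * t + a * 1)). ring. apply der_mult. apply der_const. apply derivable_pt_lim_id.
  apply derivable_pt_lim_exp.
Qed.

Lemma rc_exp_lin T a t : rc T (fun s => exp (a * s)) t.
Proof. apply cont_rc. apply derivable_continuous_pt. exists (a * exp (a * t)). apply der_exp_lin. Qed.

Section G.
Variables (n : nat) (T : R) (M : mat) (w : R -> vec).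
Hypothesis HT : 0 < T.
Hypothesis Hc : forall i, (i<n)%nat -> forall t, 0 <= t <= T -> rc T (fun s => w s i) t.
Hypothesis Hd : forall i, (i<n)%nat -> forall t, 0 < t < T -> derivable_pt_lim (fun s => w s i) t (mv n M (w t) i).

Let S := fun s => dot n (w s) (w s).
Lemma S_rc : forall t, 0 <= t <= T -> rc T S t.
Proof. intros; apply rc_dot; intros; apply Hc; auto. Qed.
Lemma S_der : forall t, 0 < t < T -> derivable_pt_lim S t (2 * dot n (w t) (mv n M (w t))).
Proof. intros t Ht. apply (der_val _ _ (dot n (mv n M (w t)) (w t) + dot n (w t) (mv n M (w t)))).
  rewrite dot_comm; ring. apply der_dot; intros; apply Hd; auto. Qed.

Lemma gronwall_fwd : (forall i, (i<n)%nat -> w 0 i = 0) -> forall t, 0 <= t <= T -> forall i, (i<n)%nat -> w t i = 0.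
Proof.
  intros H0 t Ht. set (K := mnorm n M).
  set (phi := fun s => exp (- (2*K) * s) * S s).
  assert (Hm := mono T phi (fun s => (- (2*K)) * exp (- (2*K) * s) * S s + exp (- (2*K) * s) * (2 * dot n (w s) (mv n M (w s)))) HT).
  assert (Hle : phi t <= phi 0).
  { apply Hm; try lra.
    - intros; apply rc_mult. apply rc_exp_lin. apply S_rc; auto.
    - intros s Hs. apply (der_mult (fun s => exp (- (2*K) * s)) S). apply der_exp_lin. apply S_der; auto.
    - intros s Hs. assert (Hb := dot_mv_abs n M (w s)). fold K in Hb.
      assert (Hp := exp_pos (- (2*K) * s)). fold (S s) in Hb.
      assert (dot n (w s) (mv n M (w s)) <= K * S s) by (unfold Rabs in Hb; destruct Rcase_abs; lra). nra. }
  assert (HS0 : S 0 = 0). { unfold S, dot. transitivity (sumR n (fun _ => 0)). apply sumR_ext; intros; rewrite H0; auto; ring. apply sumR_zero. }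
  unfold phi in Hle. rewrite HS0, Rmult_0_r in Hle.
  assert (0 <= S t) by apply dot_self_nonneg. assert (Hp := exp_pos (- (2*K) * t)).
  assert (S t = 0) by nra. apply dot_self_zero; auto.
Qed.

Lemma gronwall_bwd : (forall i, (i<n)%nat -> w T i = 0) -> forall t, 0 <= t <= T -> forall i, (i<n)%nat -> w t i = 0.
Proof.
  intros H0 t Ht. set (K := mnorm n M).
  set (phi := fun s => - (exp ((2*K) * s) * S s)).
  assert (Hm := mono T phi (fun s => - ((2*K) * exp ((2*K) * s) * S s + exp ((2*K) * s) * (2 * dot n (w s) (mv n M (w s))))) HT).
  assert (Hle : phi T <= phi t).
  { apply Hm; try lra.
    - intros; apply rc_opp, rc_mult. apply rc_exp_lin. apply S_rc; auto.
    - intros s Hs. apply (derivable_pt_lim_opp (fun s => exp ((2*K) * s) * S s)). apply (der_mult (fun s => exp ((2*K) * s)) S). apply der_exp_lin. apply S_der; auto.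
    - intros s Hs. assert (Hb := dot_mv_abs n M (w s)). fold K in Hb.
      assert (Hp := exp_pos ((2*K) * s)). fold (S s) in Hb.
      assert (- (K * S s) <= dot n (w s) (mv n M (w s))) by (unfold Rabs in Hb; destruct Rcase_abs; lra). nra. }
  assert (HS0 : S T = 0). { unfold S, dot. transitivity (sumR n (fun _ => 0)). apply sumR_ext; intros; rewrite H0; auto; ring. apply sumR_zero. }
  unfold phi in Hle. rewrite HS0, Rmult_0_r in Hle.
  assert (0 <= S t) by apply dot_self_nonneg. assert (Hp := exp_pos ((2*K) * t)).
  assert (S t = 0) by nra. apply dot_self_zero; auto.
Qed.
End G.


Lemma dot_trl k M x y : dot k (mv k (tr M) x) y = dot k x (mv k M y).
Proof. rewrite dot_comm, dot_tr, dot_comm. reflexivity. Qed.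

Lemma dot_idm_r k w f : dot k w (mv k idm f) = dot k w f.
Proof. apply dot_ext; auto. intros; apply mv_idm; auto. Qed.

Section S.
Variables (n n1 : nat) (T : R) (A G Gam B Q H Rm Rinv : mat) (gamma : R).

Definition nuv (y : vec) : vec := mv n1 Rinv (mv n (tr B) y).
Definition Fev (e f P Y : vec) : vec :=
  vadd (vadd (vadd (mv n A e) (mv n1 B (nuv Y))) (mv n G f)) (vscal gamma P).
Definition Ffv (f P : vec) : vec := vadd (mv n (madd A G) f) (vscal gamma P).
Definition FPv (e f P : vec) : vec :=
  vsub (vopp (mv n (tr (madd A G)) P)) (mv n (tr (msub idm Gam)) (mv n Q (vsub e (mv n Gam f)))).
Definition FYv (e f Y : vec) : vec :=
  vadd (vopp (mv n (tr A) Y)) (mv n Q (vsub e (mv n Gam f))).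

Hypothesis hinv : forall i j, (i < n1)%nat -> (j < n1)%nat -> mm n1 Rm Rinv i j = idm i j.

Lemma qf_nu Y : qf n1 Rm (nuv Y) = dot n Y (mv n1 B (nuv Y)).
Proof.
  unfold qf. rewrite (dot_ext n1 (nuv Y) (nuv Y) (mv n1 Rm (nuv Y)) (mv n (tr B) Y)); auto.
  - rewrite dot_tr, dot_comm. reflexivity.
  - intros i Hi. unfold nuv. rewrite <- mv_mm. rewrite <- (mv_idm n1 (mv n (tr B) Y) i Hi).
    unfold mv at 1 3. apply sumR_ext. intros; rewrite hinv; auto.
Qed.

Lemma alg_J e f P Y :
  dot n (FYv e f Y) (vsub e f) + dot n Y (vsub (Fev e f P Y) (Ffv f P))
  - (dot n (FPv e f P) f + dot n P (Ffv f P))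
  = qf n Q (vsub e (mv n Gam f)) + qf n1 Rm (nuv Y) - gamma * dot n P P.
Proof.
  rewrite qf_nu. unfold qf, FYv, Fev, Ffv, FPv.
  repeat (rewrite ?dot_plus_l, ?dot_minus_l, ?dot_opp_l, ?dot_scal_l, ?dot_plus_r, ?dot_minus_r, ?dot_scal_r,
     ?dot_trl, ?mv_madd, ?mv_msub, ?mv_vsub, ?dot_idm_r).
  rewrite (dot_comm n (mv n Q e) e), (dot_comm n (mv n Q e) f), (dot_comm n (mv n Q (mv n Gam f)) e),
    (dot_comm n (mv n Q (mv n Gam f)) f), (dot_comm n (mv n Q (mv n Gam f)) (mv n Gam f)),
    (dot_comm n (mv n Q e) (mv n Gam f)).
  ring.
Qed.

Lemma mv_mm_f k M N v : mv k (mm k M N) v = mv k M (mv k N v).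
Proof. apply functional_extensionality; intro i; apply mv_mm. Qed.

Lemma alg_H1 e f P : gamma <> 0 -> (forall i, (i<n)%nat -> e i = f i) ->
  dot n (FPv e f P) f + dot n P (Ffv f P)
  = - qf n (Qhat n Gam Q) f + / gamma * dot n (vscal gamma P) (vscal gamma P).
Proof.
  intros Hg Hef. unfold FPv, Ffv, qf, Qhat.
  rewrite (mv_ext n Q (vsub e (mv n Gam f)) (vsub f (mv n Gam f))) by (intros; unfold vsub; rewrite Hef; auto).
  rewrite !mv_mm_f, (dot_comm n f (mv n (tr _) _)), dot_trl.
  rewrite (mv_ext n Q (mv n (msub idm Gam) f) (vsub f (mv n Gam f))) by (intros; rewrite mv_msub; unfold vsub; rewrite mv_idm; auto).
  rewrite (dot_ext n (mv n Q (vsub f (mv n Gam f))) (mv n Q (vsub f (mv n Gam f))) (mv n (msub idm Gam) f) (vsub f (mv n Gam f))) by (auto; intros; rewrite mv_msub; unfold vsub; rewrite mv_idm; auto).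
  repeat (rewrite ?dot_plus_l, ?dot_minus_l, ?dot_opp_l, ?dot_scal_l, ?dot_plus_r, ?dot_minus_r, ?dot_scal_r,
     ?dot_trl, ?mv_madd, ?mv_msub, ?mv_vsub, ?dot_idm_r).
  field. auto.
Qed.

Definition DS (d : vec) (e f P Y : R -> vec) : Prop :=
  solves_on n T e (fun t => Fev (e t) (f t) (P t) (Y t)) /\
  solves_on n T f (fun t => Ffv (f t) (P t)) /\
  solves_on n T P (fun t => FPv (e t) (f t) (P t)) /\
  solves_on n T Y (fun t => FYv (e t) (f t) (Y t)) /\
  veq n (e 0) d /\ veq n (f 0) (fun _ => 0) /\ veq n (P T) (mv n H (e T)) /\
  veq n (Y T) (vopp (mv n H (e T))).

Lemma rc_vec_mv k M (u : R -> vec) t : (forall j, (j<k)%nat -> rc T (fun s => u s j) t) ->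
  forall j, rc T (fun s => mv k M (u s) j) t.
Proof. apply rc_mv. Qed.

Theorem DS_unique : 0 < T -> 0 < gamma -> H1 n T A G Gam Q H gamma -> H2 n n1 T A G Gam B Q H Rm gamma ->
  forall d e f P Y, DS d e f P Y -> veq n d (fun _ => 0) ->
  forall t, 0 <= t <= T -> forall i, (i<n)%nat -> e t i = 0 /\ f t i = 0 /\ P t i = 0 /\ Y t i = 0.
Proof.
  intros HT Hg [eps0 [He0 HH1]] [del0 [Hd0 HH2]] d e f P Y
    [[ce de] [[cf df] [[cP dP] [[cY dY] [e0 [f0 [PT YT]]]]]]] Hd.
  assert (e0' : veq n (e 0) (fun _ => 0)) by (intros i Hi; rewrite e0, Hd; auto).
  assert (ce' : forall i, (i<n)%nat -> forall t, 0 <= t <= T -> rc T (fun s => e s i) t) by exact ce.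
  assert (cf' : forall i, (i<n)%nat -> forall t, 0 <= t <= T -> rc T (fun s => f s i) t) by exact cf.
  assert (cP' : forall i, (i<n)%nat -> forall t, 0 <= t <= T -> rc T (fun s => P s i) t) by exact cP.
  assert (cY' : forall i, (i<n)%nat -> forall t, 0 <= t <= T -> rc T (fun s => Y s i) t) by exact cY.
  set (nu := fun t => nuv (Y t)).
  assert (cnu : forall i, (i<n1)%nat -> forall t, 0 <= t <= T -> rc T (fun s => nu s i) t).
  { intros i Hi t Ht. unfold nu, nuv. apply (rc_mv T n1 Rinv (fun s => mv n (tr B) (Y s))).
    intros j Hj. apply (rc_mv T n (tr B) Y). intros; apply cY'; auto. }
  set (Phi := fun t => dot n (Y t) (vsub (e t) (f t)) - dot n (P t) (f t)).
  set (g1 := fun t => qf n Q (vsub (e t) (mv n Gam (f t))) + qf n1 Rm (nu t) - gamma * dot n (P t) (P t)).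
  assert (RJ : Rint g1 0 T (Phi T - Phi 0)).
  { apply ftc; auto.
    - intros t Ht. unfold Phi. apply rc_minus; apply rc_dot; intros; auto.
      apply (rc_minus T (fun s => e s j) (fun s => f s j)); auto.
    - intros t Ht. unfold Phi, g1, nu. rewrite <- alg_J.
      apply der_minus. apply (der_dot n Y (fun s => vsub (e s) (f s))); intros j Hj. apply dY; auto.
      apply (der_minus (fun s => e s j) (fun s => f s j)). apply de; auto. apply df; auto.
      apply (der_dot n P f); intros j Hj. apply dP; auto. apply df; auto.
    - intros t Ht. unfold g1, qf. apply rc_minus. apply rc_plus.
      + apply (rc_dot T n (fun s => vsub (e s) (mv n Gam (f s))) (fun s => mv n Q (vsub (e s) (mv n Gam (f s))))).
        * intros j Hj. apply (rc_minus T (fun s => e s j) (fun s => mv n Gam (f s) j)); auto. apply rc_mv; intros; auto.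
        * intros j Hj. apply rc_mv. intros j' Hj'. apply (rc_minus T (fun s => e s j') (fun s => mv n Gam (f s) j')); auto. apply rc_mv; intros; auto.
      + apply (rc_dot T n1 nu (fun s => mv n1 Rm (nu s))). intros; auto. intros j Hj; apply rc_mv; intros; auto.
      + apply rc_mult. apply rc_const. apply rc_dot; intros; auto. }
  destruct (integrable T (fun t => dot n1 (nu t) (nu t)) HT) as [L RL].
  { intros; apply rc_dot; intros; auto. }
  specialize (HH2 nu e f P cnu (conj ce de) (conj cf df) (conj cP dP) e0' f0 PT _ _ RJ RL).
  assert (EJ : Phi T - Phi 0 + qf n H (e T) = 0).
  { unfold Phi. rewrite (dot_ext n (Y 0) (Y 0) (vsub (e 0) (f 0)) (fun _ => 0)), dot_zero_r; auto.
    2:{ intros; unfold vsub; rewrite e0', f0; auto; ring. }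
    rewrite (dot_ext n (P 0) (P 0) (f 0) (fun _ => 0)), dot_zero_r; auto.
    rewrite (dot_ext n (Y T) (vopp (mv n H (e T))) (vsub (e T) (f T)) (vsub (e T) (f T))); auto.
    rewrite (dot_ext n (P T) (mv n H (e T)) (f T) (f T)); auto.
    unfold qf. rewrite dot_opp_l, dot_minus_r, (dot_comm n (e T)). ring. }
  assert (HL : L <= 0). { assert (0 <= del0 * L -> 0 <= L) by (intros; nra). nra. }
  assert (Hnu : forall t, 0 <= t <= T -> forall i, (i<n1)%nat -> nu t i = 0).
  { intros t Ht. apply dot_self_zero. apply (zero_int T (fun t => dot n1 (nu t) (nu t)) L); auto.
    intros; apply rc_dot; intros; auto. intros; apply dot_self_nonneg. }
  assert (Hw : forall t, 0 <= t <= T -> forall i, (i<n)%nat -> (fun s => vsub (e s) (f s)) t i = 0).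
  { apply (gronwall_fwd n T A (fun s => vsub (e s) (f s)) HT).
    - intros i Hi t Ht. apply (rc_minus T (fun s => e s i) (fun s => f s i)); auto.
    - intros i Hi t Ht. apply (der_val _ _ (Fev (e t) (f t) (P t) (Y t) i - Ffv (f t) (P t) i)).
      + unfold Fev, Ffv. rewrite (mv_ext n1 B (nuv (Y t)) (fun _ => 0)), mv_zero.
        2:{ intros; apply Hnu; auto; lra. }
        rewrite mv_vsub, mv_madd. unfold vadd, vsub, vscal. ring.
      + apply (der_minus (fun s => e s i) (fun s => f s i)). apply de; auto. apply df; auto.
    - intros i Hi. unfold vsub. rewrite e0', f0; auto; ring. }
  assert (Hef : forall t, 0 <= t <= T -> forall i, (i<n)%nat -> e t i = f t i).
  { intros t Ht i Hi. specialize (Hw t Ht i Hi). simpl in Hw. unfold vsub in Hw. lra. }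
  set (g := fun t => vscal gamma (P t)).
  assert (cg : forall i, (i<n)%nat -> forall t, 0 <= t <= T -> rc T (fun s => g s i) t).
  { intros. unfold g, vscal. apply rc_mult. apply rc_const. auto. }
  set (Psi := fun t => dot n (P t) (f t)).
  set (g2 := fun t => - qf n (Qhat n Gam Q) (f t) + / gamma * dot n (g t) (g t)).
  assert (RJ1 : Rint g2 0 T (Psi T - Psi 0)).
  { apply ftc; auto.
    - intros t Ht. unfold Psi. apply rc_dot; intros; auto.
    - intros t Ht. unfold Psi, g2, g. rewrite <- (alg_H1 (e t)); try lra.
      apply (der_dot n P f); intros j Hj. apply dP; auto. apply df; auto.
      intros; apply Hef; auto; lra.
    - intros t Ht. unfold g2, qf. apply rc_plus. apply rc_opp.
      + apply (rc_dot T n f (fun s => mv n (Qhat n Gam Q) (f s))); intros; auto. apply rc_mv; intros; auto.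
      + apply rc_mult. apply rc_const. apply rc_dot; intros; auto. }
  destruct (integrable T (fun t => dot n (g t) (g t)) HT) as [L1 RL1].
  { intros; apply rc_dot; intros; auto. }
  specialize (HH1 g f cg (conj cf df) f0 _ _ RJ1 RL1).
  assert (EJ1 : Psi T - Psi 0 - qf n H (f T) = 0).
  { unfold Psi. rewrite (dot_ext n (P 0) (P 0) (f 0) (fun _ => 0)), dot_zero_r; auto.
    rewrite (dot_ext n (P T) (mv n H (f T)) (f T) (f T)); auto.
    unfold qf. rewrite (dot_comm n (f T)). ring.
    intros i Hi. rewrite PT; auto. rewrite (mv_ext n H (e T) (f T)); auto. intros; apply Hef; auto; lra. }
  assert (HL1 : L1 <= 0). { assert (0 <= eps0 * L1 -> 0 <= L1) by (intros; nra). nra. }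
  assert (HP : forall t, 0 <= t <= T -> forall i, (i<n)%nat -> P t i = 0).
  { intros t Ht i Hi. assert (Hgz : g t i = 0).
    { apply (dot_self_zero n); auto. apply (zero_int T (fun t => dot n (g t) (g t)) L1); auto.
      intros; apply rc_dot; intros; auto. intros; apply dot_self_nonneg. }
    unfold g, vscal in Hgz. apply Rmult_integral in Hgz. destruct Hgz; auto; lra. }
  assert (Hf : forall t, 0 <= t <= T -> forall i, (i<n)%nat -> f t i = 0).
  { apply (gronwall_fwd n T (madd A G) f HT); auto.
    intros i Hi t Ht. apply (der_val _ _ (Ffv (f t) (P t) i)).
    unfold Ffv, vadd, vscal. rewrite HP by (auto; lra). ring. apply df; auto. }
  assert (He : forall t, 0 <= t <= T -> forall i, (i<n)%nat -> e t i = 0).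
  { intros. rewrite Hef; auto. }
  assert (HY : forall t, 0 <= t <= T -> forall i, (i<n)%nat -> Y t i = 0).
  { apply (gronwall_bwd n T (fun i j => - A j i) Y HT); auto.
    - intros i Hi t Ht. apply (der_val _ _ (FYv (e t) (f t) (Y t) i)).
      + unfold FYv. rewrite (mv_ext n Q (vsub (e t) (mv n Gam (f t))) (fun _ => 0)), mv_zero.
        unfold vadd, vopp, mv, tr. rewrite <- sumR_opp. ring_simplify. apply sumR_ext; intros; ring.
        intros j Hj. unfold vsub. rewrite He by (auto; lra). rewrite (mv_ext n Gam (f t) (fun _ => 0)), mv_zero. ring.
        intros; apply Hf; auto; lra.
      + apply dY; auto.
    - intros i Hi. rewrite YT; auto. unfold vopp. rewrite (mv_ext n H (e T) (fun _ => 0)), mv_zero. ring.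
      intros; apply He; auto; lra. }
  intros t Ht i Hi. repeat split; [apply He|apply Hf|apply HP|apply HY]; auto.
Qed.
End S.


Definition lcf (a : R) (X : R -> vec) (b : R) (Y : R -> vec) : R -> vec := fun t => lc a (X t) b (Y t).

Lemma solves_lc k T a b x1 x2 F1 F2 : solves_on k T x1 F1 -> solves_on k T x2 F2 ->
  solves_on k T (lcf a x1 b x2) (fun t => lc a (F1 t) b (F2 t)).
Proof.
  intros [c1 d1] [c2 d2]. split.
  - intros i Hi t Ht. unfold lcf, lc. apply (rc_plus T (fun s => a * x1 s i) (fun s => b * x2 s i));
      apply rc_mult; try apply rc_const; [apply c1|apply c2]; auto.
  - intros i Hi t Ht. unfold lcf, lc. apply (der_plus (fun s => a * x1 s i) (fun s => b * x2 s i)).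
    apply (der_val _ _ (0 * x1 t i + a * F1 t i)). ring. apply der_mult. apply der_const. apply d1; auto.
    apply (der_val _ _ (0 * x2 t i + b * F2 t i)). ring. apply der_mult. apply der_const. apply d2; auto.
Qed.

Lemma solves_ext k T x F F' : solves_on k T x F -> (forall t i, (i<k)%nat -> 0 < t < T -> F t i = F' t i) -> solves_on k T x F'.
Proof. intros [c d] HF. split; auto. intros i Hi t Ht. rewrite <- HF; auto. Qed.

Lemma solves_sub k T x1 x2 F1 F2 F : solves_on k T x1 F1 -> solves_on k T x2 F2 ->
  (forall t i, (i<k)%nat -> 0 < t < T -> F t i = F1 t i - F2 t i) ->
  solves_on k T (fun t => vsub (x1 t) (x2 t)) F.
Proof.
  intros [c1 d1] [c2 d2] HF. split.
  - intros i Hi t Ht. unfold vsub. apply (rc_minus T (fun s => x1 s i) (fun s => x2 s i)); [apply c1|apply c2]; auto.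
  - intros i Hi t Ht. unfold vsub. rewrite HF; auto. apply (der_minus (fun s => x1 s i) (fun s => x2 s i)); [apply d1|apply d2]; auto.
Qed.

Lemma solves_zero k T F : (forall t i, (i<k)%nat -> 0 < t < T -> F t i = 0) -> solves_on k T (fun _ => fun _ => 0) F.
Proof. intros HF. split. intros i Hi t Ht. apply (rc_const T 0). intros i Hi t Ht. rewrite HF; auto. apply der_const. Qed.

Lemma nuv_lc n n1 B Rinv a u b v : nuv n n1 B Rinv (lc a u b v) = lc a (nuv n n1 B Rinv u) b (nuv n n1 B Rinv v).
Proof. unfold nuv. rewrite !mv_lc. reflexivity. Qed.

Lemma lc_vadd a u b v u' v' : vadd (lc a u b v) (lc a u' b v') = lc a (vadd u u') b (vadd v v').
Proof. apply functional_extensionality; intro; unfold lc, vadd; ring. Qed.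
Lemma lc_vsub a u b v u' v' : vsub (lc a u b v) (lc a u' b v') = lc a (vsub u u') b (vsub v v').
Proof. apply functional_extensionality; intro; unfold lc, vsub; ring. Qed.
Lemma lc_vopp a u b v : vopp (lc a u b v) = lc a (vopp u) b (vopp v).
Proof. apply functional_extensionality; intro; unfold lc, vopp; ring. Qed.
Lemma lc_vscal c a u b v : vscal c (lc a u b v) = lc a (vscal c u) b (vscal c v).
Proof. apply functional_extensionality; intro; unfold lc, vscal; ring. Qed.

Section F.
Variables (n n1 : nat) (T : R) (A G Gam B Q H Rm Rinv : mat) (gamma : R).
Notation DSs := (DS n n1 T A G Gam B Q H Rinv gamma).

Lemma DS_lc a b d1 e1 f1 P1 Y1 d2 e2 f2 P2 Y2 : DSs d1 e1 f1 P1 Y1 -> DSs d2 e2 f2 P2 Y2 ->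
  DSs (lc a d1 b d2) (lcf a e1 b e2) (lcf a f1 b f2) (lcf a P1 b P2) (lcf a Y1 b Y2).
Proof.
  intros [se1 [sf1 [sP1 [sY1 [i1 [j1 [k1 l1]]]]]]] [se2 [sf2 [sP2 [sY2 [i2 [j2 [k2 l2]]]]]]].
  unfold DS. refine (conj _ (conj _ (conj _ (conj _ (conj _ (conj _ (conj _ _))))))).
  - eapply solves_ext. apply (solves_lc n T a b e1 e2 _ _ se1 se2). intros t i Hi Ht.
    unfold lcf, Fev. rewrite nuv_lc, !mv_lc. unfold lc, vadd, vsub, vopp, vscal; ring.
  - eapply solves_ext. apply (solves_lc n T a b f1 f2 _ _ sf1 sf2). intros t i Hi Ht.
    unfold lcf, Ffv. rewrite !mv_lc. unfold lc, vadd, vsub, vopp, vscal; ring.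
  - eapply solves_ext. apply (solves_lc n T a b P1 P2 _ _ sP1 sP2). intros t i Hi Ht.
    unfold lcf, FPv. rewrite !mv_lc, !lc_vsub, !mv_lc. unfold lc, vadd, vsub, vopp, vscal; ring.
  - eapply solves_ext. apply (solves_lc n T a b Y1 Y2 _ _ sY1 sY2). intros t i Hi Ht.
    unfold lcf, FYv. rewrite !mv_lc, !lc_vsub, !mv_lc. unfold lc, vadd, vsub, vopp, vscal; ring.
  - intros i Hi. unfold lcf, lc. rewrite i1, i2; auto.
  - intros i Hi. unfold lcf, lc. rewrite j1, j2; auto. ring.
  - intros i Hi. unfold lcf. rewrite mv_lc. unfold lc. rewrite k1, k2; auto.
  - intros i Hi. unfold lcf. rewrite mv_lc. unfold lc, vopp. rewrite l1, l2; auto. unfold vopp; ring.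
Qed.

Lemma DS_veq d d' e f P Y : DSs d e f P Y -> veq n d d' -> DSs d' e f P Y.
Proof. intros [a [b [c [g [i [j k]]]]]] Hd. refine (conj a (conj b (conj c (conj g (conj _ (conj j k)))))). intros x Hx. rewrite i, Hd; auto. Qed.

Lemma DS_zero : DSs (fun _ => 0) (fun _ _ => 0) (fun _ _ => 0) (fun _ _ => 0) (fun _ _ => 0).
Proof.
  unfold DS. refine (conj _ (conj _ (conj _ (conj _ (conj _ (conj _ (conj _ _))))))); try (intros ? ?; reflexivity).
  - apply solves_zero. intros. unfold Fev, nuv. rewrite !mv_zero. unfold vadd, vscal; ring.
  - apply solves_zero. intros. unfold Ffv. rewrite !mv_zero. unfold vadd, vscal; ring.
  - apply solves_zero. intros. unfold FPv.
    replace (vsub (fun _ => 0) (mv n Gam (fun _ => 0))) with (fun _ : nat => 0).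
    rewrite !mv_zero. unfold vsub, vopp; ring. rewrite mv_zero. apply functional_extensionality; intro; unfold vsub; ring.
  - apply solves_zero. intros. unfold FYv.
    replace (vsub (fun _ => 0) (mv n Gam (fun _ => 0))) with (fun _ : nat => 0).
    rewrite !mv_zero. unfold vadd, vopp; ring. rewrite mv_zero. apply functional_extensionality; intro; unfold vsub; ring.
  - intros i Hi. rewrite mv_zero. reflexivity.
  - intros i Hi. rewrite mv_zero. unfold vopp; ring.
Qed.
End F.


Lemma mv_vscal k M c u : mv k M (vscal c u) = vscal c (mv k M u).
Proof. apply functional_extensionality; intro j; unfold mv, vscal. rewrite <- sumR_scal. apply sumR_ext; intros; ring. Qed.

Lemma AV_DS n n1 T A G Gam B Q H Rinv eta m0 gamma m p y N x0 xN mN pN yN :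
  MF_sol n n1 T A G Gam B Q H Rinv eta m0 gamma m p y ->
  AV_sol n n1 T A G Gam B Q H Rinv eta m0 gamma y N x0 xN mN pN yN ->
  DS n n1 T A G Gam B Q H Rinv gamma (vsub (avg0 N x0) m0)
    (fun t => vsub (xN t) (m t)) (fun t => vsub (mN t) (m t))
    (fun t => vsub (pN t) (p t)) (fun t => vsub (yN t) (y t)).
Proof.
  intros [sm [sp [sy [m0e [pT yT]]]]] [sx [smN [spN [syN [x0e [mN0 [pNT yNT]]]]]]].
  unfold DS. refine (conj _ (conj _ (conj _ (conj _ (conj _ (conj _ (conj _ _))))))).
  - apply (solves_sub n T _ _ _ _ _ sx sm). intros t i Hi Ht.
    unfold Fev, nuv. repeat rewrite ?mv_vsub, ?mv_vadd, ?mv_madd, ?mv_vscal. unfold vadd, vsub, vscal. ring.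
  - apply (solves_sub n T _ _ _ _ _ smN sm). intros t i Hi Ht.
    unfold Ffv. repeat rewrite ?mv_vsub, ?mv_vadd, ?mv_madd, ?mv_vscal. unfold vadd, vsub, vscal. ring.
  - apply (solves_sub n T _ _ _ _ _ spN sp). intros t i Hi Ht.
    unfold FPv. repeat rewrite ?mv_vsub, ?mv_vadd, ?mv_madd, ?mv_vscal. unfold vadd, vsub, vscal, vopp. ring.
  - apply (solves_sub n T _ _ _ _ _ syN sy). intros t i Hi Ht.
    unfold FYv. repeat rewrite ?mv_vsub, ?mv_vadd, ?mv_madd, ?mv_vscal. unfold vadd, vsub, vscal, vopp. ring.
  - intros i Hi. unfold vsub. rewrite x0e, m0e; auto.
  - intros i Hi. unfold vsub. rewrite mN0, m0e; auto. ring.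
  - intros i Hi. rewrite mv_vsub. unfold vsub. rewrite pNT, pT; auto.
  - intros i Hi. rewrite mv_vsub. unfold vsub, vopp. rewrite yNT, yT; auto. unfold vopp. ring.
Qed.


Fixpoint combo (n : nat) (l : list (vec * vec)) (d : vec) (i : nat) : R :=
  match l with nil => 0 | p :: l' => dot n (snd p) d * fst p i + combo n l' d i end.

Definition ek (k : nat) : vec := fun j => if Nat.eqb j k then 1 else 0.

Lemma dot_ek n k d : (k < n)%nat -> dot n (ek k) d = d k.
Proof. intros Hk. unfold dot. rewrite (sumR_single n _ k Hk). unfold ek. rewrite Nat.eqb_refl; ring.
  intros j Hj Hne. unfold ek. destruct (Nat.eqb_spec j k); [lia|ring]. Qed.

Lemma combo_lc n l a u b v i : combo n l (lc a u b v) i = a * combo n l u i + b * combo n l v i.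
Proof. induction l; simpl; [ring|]. rewrite IHl. unfold dot, lc.
  rewrite (sumR_ext n (fun j => snd a0 j * (a * u j + b * v j)) (fun j => a * (snd a0 j * u j) + b * (snd a0 j * v j))) by (intros; ring).
  rewrite sumR_plus, !sumR_scal. ring. Qed.

Lemma combo_map n k l v d i : (k < n)%nat ->
  combo n (map (fun p => (fst p, vsub (snd p) (vscal (dot n (snd p) v) (ek k)))) l) d i
  = combo n l d i - d k * combo n l v i.
Proof. intros Hk. induction l; simpl; [ring|]. rewrite IHl. rewrite dot_minus_l, dot_scal_l, dot_ek by auto. ring. Qed.

Section Basis.
Variables (n : nat) (Dp : vec -> Prop).
Hypothesis Dlc : forall u v a b, Dp u -> Dp v -> Dp (lc a u b v).

Lemma basis_k : forall k, (k <= n)%nat -> exists l, (forall p, In p l -> Dp (fst p)) /\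
  forall d, Dp d -> (forall j, (k <= j < n)%nat -> d j = 0) -> veq n d (combo n l d).
Proof.
  induction k; intros Hk.
  - exists nil. split. intros p []. intros d Hd Hz i Hi. simpl. apply Hz; lia.
  - destruct (IHk ltac:(lia)) as [l [Hl Hc]].
    destruct (classic (exists ds, Dp ds /\ (forall j, (S k <= j < n)%nat -> ds j = 0) /\ ds k <> 0)) as [[ds [Hds [Hz Hnz]]]|Hno].
    + set (d0 := lc (/ ds k) ds 0 ds).
      assert (Hd0 : Dp d0) by (apply Dlc; auto).
      assert (Hd0k : d0 k = 1) by (unfold d0, lc; field; auto).
      assert (Hd0z : forall j, (S k <= j < n)%nat -> d0 j = 0) by (intros j Hj; unfold d0, lc; rewrite (Hz j) by auto; ring).
      exists ((d0, ek k) :: map (fun p => (fst p, vsub (snd p) (vscal (dot n (snd p) d0) (ek k)))) l).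
      split.
      * intros p [<-|Hp]; auto. apply in_map_iff in Hp. destruct Hp as [q [<- Hq]]. simpl. apply Hl; auto.
      * intros d Hd Hdz i Hi. simpl. rewrite combo_map by lia. rewrite dot_ek by lia.
        set (d' := lc 1 d (- d k) d0).
        assert (Hd' : Dp d') by (apply Dlc; auto).
        assert (Hd'z : forall j, (k <= j < n)%nat -> d' j = 0).
        { intros j Hj. unfold d', lc. destruct (Nat.eq_dec j k). subst. rewrite Hd0k; ring. rewrite Hdz, Hd0z by lia; ring. }
        specialize (Hc d' Hd' Hd'z i Hi). unfold d' in Hc. rewrite combo_lc in Hc. unfold lc in Hc. simpl. lra.
    + exists l. split; auto. intros d Hd Hdz. apply Hc; auto. intros j Hj. destruct (Nat.eq_dec j k).
      * subst. destruct (Req_dec (d k) 0); auto. exfalso. apply Hno. exists d. auto.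
      * apply Hdz; lia.
Qed.

Lemma basis : exists l, (forall p, In p l -> Dp (fst p)) /\ forall d, Dp d -> veq n d (combo n l d).
Proof. destruct (basis_k n (le_n n)) as [l [H1 H2]]. exists l. split; auto. intros d Hd. apply H2; auto. intros; lia. Qed.
End Basis.


Definition l1 (k : nat) (u : vec) : R := sumR k (fun i => Rabs (u i)).

Lemma l1_nonneg k u : 0 <= l1 k u.
Proof. apply sumR_nonneg; intros; apply Rabs_pos. Qed.

Lemma dot_le_l1sq k u : dot k u u <= l1 k u * l1 k u.
Proof. induction k; unfold dot, l1 in *; simpl. lra.
  assert (0 <= sumR k (fun i => Rabs (u i))) by (apply sumR_nonneg; intros; apply Rabs_pos).
  assert (Rabs (u k) * Rabs (u k) = u k * u k) by (rewrite <- Rabs_mult; apply Rabs_pos_eq; nra).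
  assert (0 <= Rabs (u k)) by apply Rabs_pos. nra. Qed.

Lemma vnorm_le_l1 k u : vnorm k u <= l1 k u.
Proof. unfold vnorm. rewrite <- (sqrt_square (l1 k u)) by apply l1_nonneg. apply sqrt_le_1.
  apply dot_self_nonneg. pose proof (l1_nonneg k u); nra. apply dot_le_l1sq. Qed.

Lemma abs_le_vnorm k d j : (j < k)%nat -> Rabs (d j) <= vnorm k d.
Proof. intros Hj. unfold vnorm. rewrite <- sqrt_Rsqr_abs. apply sqrt_le_1. apply Rle_0_sqr. apply dot_self_nonneg.
  unfold Rsqr. apply (term_le k (fun i => d i * d i)); auto. intros; nra. Qed.

Lemma dot_abs_bound k l d : Rabs (dot k l d) <= l1 k l * vnorm k d.
Proof. unfold dot, l1. eapply Rle_trans; [apply sumR_abs|]. rewrite Rmult_comm, <- sumR_scal. apply sumR_le.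
  intros i Hi. rewrite Rabs_mult. rewrite Rmult_comm. apply Rmult_le_compat_r. apply Rabs_pos. apply abs_le_vnorm; auto. Qed.

Lemma l1_lc k a u b v : l1 k (lc a u b v) <= Rabs a * l1 k u + Rabs b * l1 k v.
Proof. unfold l1, lc. rewrite <- !sumR_scal, <- sumR_plus. apply sumR_le. intros.
  eapply Rle_trans; [apply Rabs_triang|]. rewrite !Rabs_mult. lra. Qed.

Lemma l1_ext k u v : (forall i, (i<k)%nat -> u i = v i) -> l1 k u = l1 k v.
Proof. intros H; unfold l1; apply sumR_ext; intros; rewrite H; auto. Qed.

Lemma l1_bounded T k (u : R -> vec) : 0 < T -> (forall i, (i<k)%nat -> forall t, 0 <= t <= T -> rc T (fun s => u s i) t) ->
  exists M, 0 <= M /\ forall t, 0 <= t <= T -> l1 k (u t) <= M.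
Proof.
  intros HT. induction k; intros Hc.
  - exists 0. split. lra. intros; unfold l1; simpl; lra.
  - destruct IHk as [M1 [HM1 HB1]]. intros; apply Hc; auto.
    destruct (bounded T (fun s => u s k) HT) as [M2 HB2]. intros; apply Hc; auto.
    exists (M1 + Rabs M2). split. assert (0 <= Rabs M2) by apply Rabs_pos. lra.
    intros t Ht. unfold l1; simpl. specialize (HB1 t Ht). specialize (HB2 t Ht). unfold l1 in HB1.
    assert (M2 <= Rabs M2) by apply RRle_abs. lra.
Qed.


Definition KX (n : nat) (e f P Y : R -> vec) (t : R) : R := l1 n (e t) + l1 n (f t) + l1 n (P t) + l1 n (Y t).

Section L.
Variables (n n1 : nat) (T : R) (A G Gam B Q H Rm Rinv : mat) (gamma : R).
Notation DSs := (DS n n1 T A G Gam B Q H Rinv gamma).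
Hypothesis HT : 0 < T.

Lemma list_bound : forall l, (forall p, In p l -> exists e f P Y, DSs (fst p) e f P Y) ->
  exists C, 0 <= C /\ forall d, exists e f P Y, DSs (combo n l d) e f P Y /\
     forall t, 0 <= t <= T -> KX n e f P Y t <= C * vnorm n d.
Proof.
  induction l as [|[b lb] l IH]; intros Hl.
  - exists 0. split. lra. intros d. exists (fun _ _ => 0), (fun _ _ => 0), (fun _ _ => 0), (fun _ _ => 0). split.
    + eapply DS_veq. apply DS_zero. intros i Hi. reflexivity.
    + intros t Ht. unfold KX, l1. rewrite (sumR_ext n _ (fun _ => 0)) by (intros; apply Rabs_R0). rewrite sumR_zero. lra.
  - destruct IH as [C' [HC' HB']]. intros p Hp; apply Hl; simpl; auto.
    destruct (Hl (b, lb) (or_introl eq_refl)) as [eb [fb [Pb [Yb Hb]]]]. simpl in Hb.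
    pose proof Hb as Hb0.
    destruct Hb as [[ce _] [[cf _] [[cP _] [[cY _] _]]]].
    destruct (l1_bounded T n eb HT ce) as [M1 [H1' B1]].
    destruct (l1_bounded T n fb HT cf) as [M2 [H2' B2]].
    destruct (l1_bounded T n Pb HT cP) as [M3 [H3' B3]].
    destruct (l1_bounded T n Yb HT cY) as [M4 [H4' B4]].
    set (Mb := M1 + M2 + M3 + M4).
    exists (l1 n lb * Mb + C'). split. assert (0 <= l1 n lb) by apply l1_nonneg. unfold Mb; nra.
    intros d. destruct (HB' d) as [e' [f' [P' [Y' [HD' HK']]]]].
    set (c := dot n lb d).
    exists (lcf c eb 1 e'), (lcf c fb 1 f'), (lcf c Pb 1 P'), (lcf c Yb 1 Y'). split.
    + eapply DS_veq. apply DS_lc. exact Hb0. exact HD'. intros i Hi. simpl. unfold lc, c. ring.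
    + intros t Ht. specialize (HK' t Ht). unfold KX, lcf in *.
      assert (L1 := l1_lc n c (eb t) 1 (e' t)). assert (L2 := l1_lc n c (fb t) 1 (f' t)).
      assert (L3 := l1_lc n c (Pb t) 1 (P' t)). assert (L4 := l1_lc n c (Yb t) 1 (Y' t)).
      rewrite Rabs_R1 in L1, L2, L3, L4.
      assert (Hc : Rabs c <= l1 n lb * vnorm n d) by apply dot_abs_bound.
      specialize (B1 t Ht). specialize (B2 t Ht). specialize (B3 t Ht). specialize (B4 t Ht).
      assert (0 <= Rabs c) by apply Rabs_pos.
      assert (Rabs c * (l1 n (eb t) + l1 n (fb t) + l1 n (Pb t) + l1 n (Yb t)) <= l1 n lb * vnorm n d * Mb).
      { apply Rmult_le_compat; auto. assert (0 <= l1 n (eb t)) by apply l1_nonneg. assert (0 <= l1 n (fb t)) by apply l1_nonneg.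
        assert (0 <= l1 n (Pb t)) by apply l1_nonneg. assert (0 <= l1 n (Yb t)) by apply l1_nonneg. lra. unfold Mb; lra. }
      nra.
Qed.
End L.


Theorem lemma21
  (n n1 : nat) (T : R) (A G Gam B Q H Rm Rinv : mat) (eta m0 : vec) (gamma : R)
  (hn : (1 <= n)%nat) (hn1 : (1 <= n1)%nat) (hT : 0 < T) (hgamma : 0 < gamma)
  (hQs : symm n Q) (hQ : psd n Q) (hHs : symm n H) (hH : psd n H)
  (hRs : symm n1 Rm) (hR : pd n1 Rm) (hRinv : is_inv n1 Rm Rinv)
  (hH1 : H1 n T A G Gam Q H gamma)
  (hH2 : H2 n n1 T A G Gam B Q H Rm gamma)
  (m p y : R -> vec)
  (hMF : MF_sol n n1 T A G Gam B Q H Rinv eta m0 gamma m p y)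
  (hMFu : forall m' p' y' : R -> vec,
      MF_sol n n1 T A G Gam B Q H Rinv eta m0 gamma m' p' y' ->
      forall t, 0 <= t <= T ->
        veq n (m' t) (m t) /\ veq n (p' t) (p t) /\ veq n (y' t) (y t)) :
  exists C : R,
    forall (N : nat) (x0 : nat -> vec) (xN mN pN yN : R -> vec),
      (1 <= N)%nat ->
      AV_sol n n1 T A G Gam B Q H Rinv eta m0 gamma y N x0 xN mN pN yN ->
      forall t, 0 <= t <= T ->
        vnorm n (vsub (xN t) (m t)) + vnorm n (vsub (mN t) (m t))
        + vnorm n (vsub (pN t) (p t)) + vnorm n (vsub (yN t) (y t))
        <= C * vnorm n (vsub (avg0 N x0) m0).
Proof.
  assert (hinv : forall i j, (i < n1)%nat -> (j < n1)%nat -> mm n1 Rm Rinv i j = idm i j)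
    by (intros i j Hi Hj; apply (hRinv i j Hi Hj)).
  set (Dp := fun d => exists e f P Y, DS n n1 T A G Gam B Q H Rinv gamma d e f P Y).
  assert (Dlc : forall u v a b, Dp u -> Dp v -> Dp (lc a u b v)).
  { intros u v a b [e1 [f1 [P1 [Y1 HD1]]]] [e2 [f2 [P2 [Y2 HD2]]]].
    exists (lcf a e1 b e2), (lcf a f1 b f2), (lcf a P1 b P2), (lcf a Y1 b Y2). apply DS_lc; auto. }
  destruct (basis n Dp Dlc) as [l [Hl Hb]].
  destruct (list_bound n n1 T A G Gam B Q H Rinv gamma hT l Hl) as [C [HC HB]].
  exists C. intros N x0 xN mN pN yN HN HAV t Ht.
  set (d := vsub (avg0 N x0) m0).
  assert (HD := AV_DS _ _ _ _ _ _ _ _ _ _ _ _ _ _ _ _ _ _ _ _ _ _ hMF HAV).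
  fold d in HD.
  assert (Hd : veq n d (combo n l d)) by (apply Hb; eexists; eauto).
  destruct (HB d) as [e' [f' [P' [Y' [HD' HK']]]]].
  assert (HZ := DS_lc n n1 T A G Gam B Q H Rinv gamma 1 (-1) _ _ _ _ _ _ _ _ _ _ HD HD').
  assert (HU := DS_unique n n1 T A G Gam B Q H Rm Rinv gamma hinv hT hgamma hH1 hH2 _ _ _ _ _ HZ).
  assert (Hz : veq n (lc 1 d (-1) (combo n l d)) (fun _ => 0)).
  { intros i Hi. unfold lc. rewrite <- Hd; auto. ring. }
  specialize (HU Hz t Ht).
  unfold lcf, lc in HU.
  eapply Rle_trans; [|apply (HK' t Ht)]. unfold KX.
  assert (E1 : l1 n (vsub (xN t) (m t)) = l1 n (e' t)) by (apply l1_ext; intros i Hi; destruct (HU i Hi) as [a _]; lra).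
  assert (E2 : l1 n (vsub (mN t) (m t)) = l1 n (f' t)) by (apply l1_ext; intros i Hi; destruct (HU i Hi) as [_ [a _]]; lra).
  assert (E3 : l1 n (vsub (pN t) (p t)) = l1 n (P' t)) by (apply l1_ext; intros i Hi; destruct (HU i Hi) as [_ [_ [a _]]]; lra).
  assert (E4 : l1 n (vsub (yN t) (y t)) = l1 n (Y' t)) by (apply l1_ext; intros i Hi; destruct (HU i Hi) as [_ [_ [_ a]]]; lra).
  rewrite <- E1, <- E2, <- E3, <- E4.
  assert (V1 := vnorm_le_l1 n (vsub (xN t) (m t))). assert (V2 := vnorm_le_l1 n (vsub (mN t) (m t))).
  assert (V3 := vnorm_le_l1 n (vsub (pN t) (p t))). assert (V4 := vnorm_le_l1 n (vsub (yN t) (y t))).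
  lra.
Qed.
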